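(* Let $K_0,\dots,K_n$ be strictly concave kernel functions and let $S=S_\sigma$ be a simplex. Then for each $i=0,1,\dots,n$ the function $m_i:S\to\mathbb{R}$ is strictly concave. Consequently $\underline{m}=\min_{j=0,\dots,n}m_j:S\to[-\infty,\infty)$ is strictly concave.
   Context: Identify the torus $\mathbb{T}=\mathbb{R}/2\pi\mathbb{Z}$ with $[0,2\pi)$. A concave kernel function is a $2\pi$-periodic function $K:\mathbb{R}\to[-\infty,\infty)$ which is real-valued and concave on $(0,2\pi)$ with $\lim_{t\downarrow0}K(t)=\lim_{t\uparrow2\pi}K(t)$ existing in $[-\infty,\infty)$; strictly concave if strictly concave on $(0,2\pi)$. For $\mathbf{y}\in\mathbb{T}^n$, $y_0=0$, $y_{n+1}=2\pi$, $F(\mathbf{y},t)=K_0(t)+\sum_{j=1}^nK_j(t-y_j)$. For a permutation $\sigma$ of $\{1,\dots,n\}$ ($\sigma(0)=0,\sigma(n+1)=n+1$), the simplex is $S_\sigma=\{\mathbf{y}:0<y_{\sigma(1)}<\dots<y_{\sigma(n)}<2\pi\}$ (a convex open set when represented in $(0,2\pi)^n$), and for $\mathbf{y}\in S_\sigma$, $m_{\sigma(k)}(\mathbf{y})=\sup_{t\in[y_{\sigma(k)},y_{\sigma(k+1)}]}F(\mathbf{y},t)$, $k=0,\dots,n$. *)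

(* Defs.v *)
From HB Require Import structures.
From mathcomp Require Import all_boot all_order all_algebra.
From mathcomp Require Import fingroup perm.
From mathcomp Require Import all_classical all_reals all_analysis.
Set Implicit Arguments. Unset Strict Implicit. Unset Printing Implicit Defensive.
Import Order.TTheory GRing.Theory Num.Theory.
Local Open Scope classical_set_scope.
Local Open Scope ring_scope.

Section Kernels.
Variable R : realType.

(* A concave kernel function K : R -> [-oo, +oo), 2pi-periodic, real-valued and
   concave on (0,2pi), with lim_{t->0+} K = lim_{t->2pi-} K existing in
   [-oo,+oo); we use the convention K(0) equals this common limit. *)
Definition kernel_base (K : R -> \bar R) : Prop :=
  [/\ (forall t, K (t + 2 * pi) = K t),
      (forall t, K t != +oo%E),
      (forall t : R, (0 < t < 2 * pi)%R -> K t \is a fin_num),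
      K t @[t --> 0^'+] --> K 0 &
      K t @[t --> (2 * pi)^'-] --> K 0].

Definition concave_kernel (K : R -> \bar R) : Prop :=
  kernel_base K /\
  forall x y l : R, (0 < x < 2 * pi)%R -> (0 < y < 2 * pi)%R -> (0 <= l <= 1)%R ->
    ((l%:E * K x + (1 - l)%R%:E * K y) <= K (l * x + (1 - l) * y)%R)%E.

Definition strictly_concave_kernel (K : R -> \bar R) : Prop :=
  kernel_base K /\
  forall x y l : R, (0 < x < 2 * pi)%R -> (0 < y < 2 * pi)%R -> x != y -> (0 < l < 1)%R ->
    ((l%:E * K x + (1 - l)%R%:E * K y) < K (l * x + (1 - l) * y)%R)%E.

Variable n : nat.

(* nodes: y_0 = 0, y_j = y (j-1) for 1 <= j <= n, y_{n+1} = 2pi *)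
Definition yext (y : 'I_n -> R) (k : nat) : R :=
  if k == 0%N then 0 else
  if @insub _ (fun j : nat => j < n)%N 'I_n k.-1 is Some j then y j else 2 * pi.

(* sigma extended by sigma(0)=0, sigma(n+1)=n+1 *)
Definition sext (s : 'S_n) (k : nat) : nat :=
  if k == 0%N then 0%N else
  if @insub _ (fun j : nat => j < n)%N 'I_n k.-1 is Some j then (s j).+1 else k.

(* position k of index i, i.e. sigma(k) = i *)
Definition spos (s : 'S_n) (i : nat) : nat :=
  if i == 0%N then 0%N else
  if @insub _ (fun j : nat => j < n)%N 'I_n i.-1 is Some j then ((s^-1)%g j).+1
  else i.

Definition in_simplex (s : 'S_n) (y : 'I_n -> R) : Prop :=
  forall k : nat, (k <= n)%N -> yext y (sext s k) < yext y (sext s k.+1).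

Definition Fsum (K : 'I_n.+1 -> R -> \bar R) (y : 'I_n -> R) (t : R) : \bar R :=
  (K ord0 t + \sum_(j < n) K (lift ord0 j) (t - y j)%R)%E.

Definition mval (K : 'I_n.+1 -> R -> \bar R) (s : 'S_n) (i : 'I_n.+1)
  (y : 'I_n -> R) : \bar R :=
  let k := spos s i in
  ereal_sup [set Fsum K y t | t in `[yext y (sext s k), yext y (sext s k.+1)]].

Definition mmin (K : 'I_n.+1 -> R -> \bar R) (s : 'S_n) (y : 'I_n -> R) : \bar R :=
  \big[Order.min/+oo%E]_(i < n.+1) mval K s i y.

Definition convcomb (l : R) (y z : 'I_n -> R) : 'I_n -> R :=
  fun j => l * y j + (1 - l) * z j.

Definition strictly_concave_on (D : ('I_n -> R) -> Prop)
  (g : ('I_n -> R) -> \bar R) : Prop :=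
  forall y z l, D y -> D z -> y <> z -> (0 < l < 1)%R ->
    ((l%:E * g y + (1 - l)%R%:E * g z) < g (convcomb l y z))%E.

End Kernels.

(* Main.v *)
Require Import Defs.
From HB Require Import structures.
From mathcomp Require Import all_boot all_order all_algebra.
From mathcomp Require Import fingroup perm.
From mathcomp Require Import all_classical all_reals all_analysis.
From mathcomp Require Import ring lra.
Import Order.TTheory GRing.Theory Num.Theory.
Import numFieldNormedType.Exports.
Local Open Scope classical_set_scope.
Local Open Scope ring_scope.
Section RealConc.
Variable R : realType.
Implicit Types (f : R -> R) (a b : R).

Definition rconc f a b := forall x y l, a < x < b -> a < y < b -> 0 <= l <= 1 ->
  l * f x + (1 - l) * f y <= f (l * x + (1 - l) * y).
Definition srconc f a b := forall x y l, a < x < b -> a < y < b -> x != y -> 0 < l < 1 ->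
  l * f x + (1 - l) * f y < f (l * x + (1 - l) * y).

Lemma srconcW f a b : srconc f a b -> rconc f a b.
Proof.
move=> H x y l hx hy /andP[l0 l1].
have [->|xy] := eqVneq x y.
  by rewrite -!mulrDl subrKC !mul1r.
move: l0; rewrite le_eqVlt => /predU1P[<-|l0].
  by rewrite !mul0r subr0 !mul1r !add0r.
move: l1; rewrite le_eqVlt => /predU1P[->|l1].
  by rewrite subrr !mul0r !mul1r !addr0.
by apply/ltW/H => //; rewrite l0 l1.
Qed.

Lemma conc3 f a b p q r : rconc f a b -> a < p -> p < q -> q < r -> r < b ->
  (r - q) * f p + (q - p) * f r <= (r - p) * f q.
Proof.
move=> H ap pq qr rb.
have rp : 0 < r - p by rewrite subr_gt0 (lt_trans pq qr).
set l := (r - q) / (r - p).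
have l01 : 0 <= l <= 1.
  rewrite /l divr_ge0 ?(ltW rp) //=; last by rewrite subr_ge0 ltW.
  by rewrite ler_pdivrMr // mul1r lerD2l lerN2 ltW.
have hp : a < p < b by rewrite ap /= (lt_trans pq (lt_trans qr rb)).
have hr : a < r < b by rewrite rb andbT (lt_trans ap (lt_trans pq qr)).
have := H p r l hp hr l01.
have -> : l * p + (1 - l) * r = q.
  rewrite /l; field; by rewrite lt0r_neq0.
have -> : 1 - l = (q - p) / (r - p).
  rewrite /l; field; by rewrite lt0r_neq0.
rewrite /l -(ler_pM2l rp) mulrDr !mulrA !(mulrC (r - p)) !mulfK ?lt0r_neq0 //.
Qed.

Lemma sconc3 f a b p q r : srconc f a b -> a < p -> p < q -> q < r -> r < b ->
  (r - q) * f p + (q - p) * f r < (r - p) * f q.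
Proof.
move=> H ap pq qr rb.
have rp : 0 < r - p by rewrite subr_gt0 (lt_trans pq qr).
set l := (r - q) / (r - p).
have l01 : 0 < l < 1.
  rewrite /l divr_gt0 ?rp //=; last by rewrite subr_gt0.
  by rewrite ltr_pdivrMr // mul1r ltrD2l ltrN2.
have hp : a < p < b by rewrite ap /= (lt_trans pq (lt_trans qr rb)).
have hr : a < r < b by rewrite rb andbT (lt_trans ap (lt_trans pq qr)).
have pr : p != r by rewrite lt_eqF // (lt_trans pq qr).
have := H p r l hp hr pr l01.
have -> : l * p + (1 - l) * r = q.
  rewrite /l; field; by rewrite lt0r_neq0.
have -> : 1 - l = (q - p) / (r - p).
  rewrite /l; field; by rewrite lt0r_neq0.
rewrite /l -(ltr_pM2l rp) mulrDr !mulrA !(mulrC (r - p)) !mulfK ?lt0r_neq0 //.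
Qed.

Lemma conc_bound f a b x t : rconc f a b -> a < x < b ->
  let c := Num.min (x - a) (b - x) / 2 in
  `|t - x| < c ->
  c * `|f t - f x| <= `|t - x| * (`|f (x - c) - f x| + `|f (x + c) - f x|).
Proof.
move=> H /andP[ax xb] c.
have c0 : 0 < c by rewrite divr_gt0 // lt_min !subr_gt0 ax xb.
have m1 : Num.min (x - a) (b - x) <= x - a by rewrite ge_min lexx.
have m2 : Num.min (x - a) (b - x) <= b - x by rewrite ge_min lexx orbT.
have m0 : 0 < Num.min (x - a) (b - x) by rewrite lt_min !subr_gt0 ax xb.
have cle1 : c < x - a by rewrite /c; lra.
have cle2 : c < b - x by rewrite /c; lra.
have a1 : a < x - c by lra.
have b1 : x + c < b by lra.
move=> htx.
have hA1 := ler_norm (f (x - c) - f x).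
have hA1' := ler_norm (- (f (x - c) - f x)); rewrite normrN in hA1'.
have hA2 := ler_norm (f (x + c) - f x).
have hA2' := ler_norm (- (f (x + c) - f x)); rewrite normrN in hA2'.
have [tx|tx|->] := ltgtP t x; last by rewrite !subrr normr0 !mul0r mulr0.
- rewrite (ltr0_norm (_ : t - x < 0)) ?subr_lt0 // in htx *.
  have h1 := @conc3 f a b t x (x + c) H.
  have h2 := @conc3 f a b (x - c) t x H.
  have e1 : (x + c - x) * f t + (x - t) * f (x + c) <= (x + c - t) * f x by apply: h1; lra.
  have e2 : (x - t) * f (x - c) + (t - (x - c)) * f x <= (x - (x - c)) * f t by apply: h2; lra.
  rewrite -[X in X * `|_| <= _](ger0_norm (ltW c0)) -normrM ler_norml.
  apply/andP; split; nra.
- rewrite (gtr0_norm (_ : 0 < t - x)) ?subr_gt0 // in htx *.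
  have h1 := @conc3 f a b (x - c) x t H.
  have h2 := @conc3 f a b x t (x + c) H.
  have e1 : (t - x) * f (x - c) + (x - (x - c)) * f t <= (t - (x - c)) * f x by apply: h1; lra.
  have e2 : (x + c - t) * f x + (t - x) * f (x + c) <= (x + c - x) * f t by apply: h2; lra.
  rewrite -[X in X * `|_| <= _](ger0_norm (ltW c0)) -normrM ler_norml.
  apply/andP; split; nra.
Unshelve. all: by end_near.
Qed.

Lemma conc_cont f a b x : rconc f a b -> a < x < b -> f t @[t --> x] --> f x.
Proof.
move=> H hx; have /andP[ax xb] := hx.
set c := Num.min (x - a) (b - x) / 2.
have c0 : 0 < c by rewrite divr_gt0 // lt_min !subr_gt0 ax xb.
set B := `|f (x - c) - f x| + `|f (x + c) - f x|.
have B0 : 0 <= B by rewrite addr_ge0.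
apply/cvgrPdist_lt => e e0.
have Bp : 0 < B + 1 by lra.
set q := c * e / (B + 1).
have q0 : 0 < q by rewrite /q; apply: divr_gt0 => //; exact: mulr_gt0.
have hq : q * (B + 1) = c * e by rewrite /q; field; lra.
have mq : 0 < Num.min c q by rewrite lt_min c0 q0.
near=> t.
have : `|x - t| < Num.min c q by near: t; exact: (nbhsx_ballx x _ mq).
rewrite lt_min => /andP[h1 h2].
have htx : `|t - x| < c by rewrite distrC.
have := @conc_bound f a b x t H hx htx; rewrite -/c -/B => hb.
rewrite distrC in h2 *.
have n0 := normr_ge0 (t - x).
set D := `|f t - f x| in hb *.
set T := `|t - x| in hb h2 n0 *.
have h3 : T * B <= q * B by rewrite ler_wpM2r // ltW.
have h4 : c * D < c * e by lra.
by rewrite distrC -/D -(ltr_pM2l c0).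
Unshelve. all: by end_near.
Qed.
Lemma conc_endl_w f a b v m : rconc f a b -> f t @[t --> a^'+] --> f a ->
  a < v < b -> 0 < m < 1 ->
  m * f a + (1 - m) * f v <= f (m * a + (1 - m) * v).
Proof.
move=> H fa /andP[av vb] /andP[m0 m1].
set w := m * a + (1 - m) * v.
have hw : a < w < b.
  apply/andP; split; rewrite /w; nra.
have cw := @conc_cont f a b w H hw.
apply: (@ler_cvg_to _ (a^'+) _ _ (fun s => m * f s + (1 - m) * f v)
   (fun s => f (m * s + (1 - m) * v))).
- apply: cvgD; last exact: cvg_cst.
  by apply: cvgM => //; exact: cvg_cst.
- apply: cvg_comp cw.
  rewrite /w; apply: cvgD; last exact: cvg_cst.
  apply: cvgM; first exact: cvg_cst.
  exact: cvg_at_right_filter (cvg_id).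
- near=> s.
  have as_ : a < s by near: s; exact: nbhs_right_gt.
  have sv : s < v by near: s; exact: nbhs_right_lt.
  apply: H; rewrite ?as_ ?(lt_trans sv vb) ?av ?vb ?ltW //.
Unshelve. all: by end_near.
Qed.

Lemma conc_endl f a b v l : srconc f a b -> f t @[t --> a^'+] --> f a ->
  a < v < b -> 0 < l < 1 ->
  l * f a + (1 - l) * f v < f (l * a + (1 - l) * v).
Proof.
move=> H fa hv /andP[l0 l1]; have /andP[av vb] := hv.
set l' := (1 + l) / 2.
have l'0 : 0 < l' < 1 by apply/andP; split; rewrite /l'; lra.
have := @conc_endl_w f a b v l' (@srconcW f a b H) fa hv l'0.
set z := l' * a + (1 - l') * v => hz.
set al := l / l'.
have al01 : 0 < al < 1.
  apply/andP; split; rewrite /al /l'.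
    by apply: divr_gt0 => //; lra.
  rewrite ltr_pdivrMr; lra.
have hz' : a < z < b by apply/andP; split; rewrite /z; nra.
have zv : z != v by rewrite /z; apply/eqP => h; nra.
have := H z v al hz' hv zv al01.
have -> : al * z + (1 - al) * v = l * a + (1 - l) * v.
  rewrite /al /z /l'; field; lra.
apply: le_lt_trans.
have e1 : al * l' = l by rewrite /al /l'; field; lra.
have e2 : al * (1 - l') + (1 - al) = 1 - l by rewrite /al /l'; field; lra.
have al0 : 0 <= al by case/andP: al01 => /ltW.
rewrite -[in X in X <= _]e2 -[in X in X <= _]e1.
move: hz; set Fa := f a; set Fv := f v; set Fz := f z; move=> hz.
nra.
Qed.
Lemma srconcN f a b : srconc f a b -> srconc (fun t => f (- t)) (- b) (- a).
Proof.
move=> H x y l hx hy xy hl.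
have -> : - (l * x + (1 - l) * y) = l * (- x) + (1 - l) * (- y) by ring.
apply: H => //.
- by move: hx => /andP[? ?]; apply/andP; split; lra.
- by move: hy => /andP[? ?]; apply/andP; split; lra.
- by rewrite eqr_opp.
Qed.

Lemma conc_endr f a b v l : srconc f a b -> f t @[t --> b^'-] --> f b ->
  a < v < b -> 0 < l < 1 ->
  l * f b + (1 - l) * f v < f (l * b + (1 - l) * v).
Proof.
move=> H fb hv hl.
have H' := @srconcN f a b H.
have fb' : (fun t => f (- t)) t @[t --> (- b)^'+] --> (fun t => f (- t)) (- b).
  by rewrite /= opprK; move/cvg_at_leftNP: fb.
have hv' : - b < - v < - a.
  by move: hv => /andP[? ?]; apply/andP; split; lra.
have := @conc_endl _ (- b) (- a) (- v) l H' fb' hv' hl.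
rewrite /= !opprK.
have -> : - (l * - b + (1 - l) * - v) = l * b + (1 - l) * v by ring.
by [].
Qed.
End RealConc.
Arguments srconc {R}.
Arguments rconc {R}.
Section Shift.
Variable R : realType.

Lemma shN {T : topologicalType} (f : R -> T) p c (l : T) :
  f t @[t --> p] --> l -> f (t + c) @[t --> p - c] --> l.
Proof.
move=> fl.
have h : (fun t => t + c) @ (p - c) --> p.
  rewrite -{2}(subrK c p); apply: cvgD; [exact: cvg_id | exact: cvg_cst].
exact: (cvg_comp _ _ h fl).
Qed.

Lemma shR {T : topologicalType} (f : R -> T) p c (l : T) :
  f t @[t --> p^'+] --> l -> f (t + c) @[t --> (p - c)^'+] --> l.
Proof.
move=> fl A /fl /=.
have h : (fun t => t + c) @ (p - c) --> p.
  rewrite -{2}(subrK c p); apply: cvgD; [exact: cvg_id | exact: cvg_cst].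
move=> /h /= H; rewrite !near_simpl /= near_withinE.
near=> t => ht /=.
have H1 : p < t + c -> A (f (t + c)) by near: t; exact: H.
by apply: H1; rewrite -ltrBlDr.
Unshelve. all: by end_near.
Qed.

Lemma shL {T : topologicalType} (f : R -> T) p c (l : T) :
  f t @[t --> p^'-] --> l -> f (t + c) @[t --> (p - c)^'-] --> l.
Proof.
move=> fl A /fl /=.
have h : (fun t => t + c) @ (p - c) --> p.
  rewrite -{2}(subrK c p); apply: cvgD; [exact: cvg_id | exact: cvg_cst].
move=> /h /= H; rewrite !near_simpl /= near_withinE.
near=> t => ht /=.
have H1 : t + c < p -> A (f (t + c)) by near: t; exact: H.
by apply: H1; rewrite -ltrBrDr.
Unshelve. all: by end_near.
Qed.
End Shift.
Section Kern.
Variable R : realType.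
Variable K : R -> \bar R.
Hypothesis HK : strictly_concave_kernel K.

Let tp := 2 * (pi : R).
Lemma tp_gt0 : 0 < tp. Proof. by rewrite /tp mulr_gt0 // pi_gt0. Qed.

Lemma kper t : K (t + tp) = K t. Proof. by case: HK => -[]. Qed.
Lemma kninf t : K t != +oo%E. Proof. by case: HK => -[]. Qed.
Lemma kfin t : 0 < t < tp -> K t \is a fin_num. Proof. by case: HK => -[] _ _ h _ _ _; apply: h. Qed.
Lemma kr0 : K t @[t --> 0^'+] --> K 0. Proof. by case: HK => -[]. Qed.
Lemma kltp : K t @[t --> tp^'-] --> K 0. Proof. by case: HK => -[]. Qed.
Lemma ktp : K tp = K 0. Proof. by rewrite -{1}(add0r tp) kper. Qed.

Definition fK t := fine (K t).

Lemma kE t : 0 < t < tp -> K t = (fK t)%:E.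
Proof. by move=> h; rewrite /fK fineK // kfin. Qed.

Lemma ksr : srconc fK 0 tp.
Proof.
move=> x y l hx hy xy hl.
case: HK => _ /(_ x y l hx hy xy hl).
have hw : 0 < l * x + (1 - l) * y < tp.
  move: hx hy hl => /andP[? ?] /andP[? ?] /andP[? ?]; apply/andP; split; nra.
by rewrite (kE x hx) (kE y hy) (kE _ hw) -!EFinM -EFinD lte_fin.
Qed.

Lemma kcont x : 0 < x < tp -> K t @[t --> x] --> K x.
Proof.
move=> hx; rewrite (kE x hx).
apply/fine_cvgP; split.
  have : x \in `]0, tp[ by rewrite in_itv.
  move/near_in_itvoo; apply: filterS => t; rewrite in_itv => /kfin.
  done.
exact: (@conc_cont _ fK 0 tp x (@srconcW _ fK 0 tp ksr) hx).
Qed.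

Lemma kC x : - tp < x < tp -> x != 0 -> K t @[t --> x] --> K x.
Proof.
move=> /andP[h1 h2] x0.
have [xp|xn] := ltP 0 x; first by apply: kcont; rewrite xp.
have xn' : x < 0 by rewrite lt_neqAle x0.
have e : K = (fun t => K (t + tp)) by apply/funext => t; rewrite kper.
rewrite e.
have hh : 0 < x + tp < tp by apply/andP; split; lra.
have := kcont _ hh; move/(@shN _ _ _ _ tp); rewrite addrK.
done.
Qed.

Lemma kR x : - tp < x < tp -> K t @[t --> x^'+] --> K x.
Proof.
move=> hx; have [->|x0] := eqVneq x 0; first exact: kr0.
by apply: cvg_at_right_filter; apply: kC.
Qed.

Lemma kL x : - tp < x <= tp -> K t @[t --> x^'-] --> K x.
Proof.
move=> /andP[h1 h2]; have [->|x0] := eqVneq x 0.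
  have e : K = (fun t => K (t + tp)) by apply/funext => t; rewrite kper.
  rewrite [in X in X @ _]e; have := @shL _ _ K tp tp (K 0) kltp.
  by rewrite subrr.
move: h2; rewrite le_eqVlt => /predU1P[->|h2]; first by rewrite ktp; exact: kltp.
by apply: cvg_at_left_filter; apply: kC => //; rewrite h1.
Qed.
End Kern.
Arguments fK {R}.
Arguments tp_gt0 {R}.
Arguments kper {R K}. Arguments kninf {R K}. Arguments kfin {R K}.
Arguments kr0 {R K}. Arguments kltp {R K}. Arguments ktp {R K}.
Arguments kE {R K}. Arguments ksr {R K}. Arguments kcont {R K}.
Arguments kC {R K}. Arguments kR {R K}. Arguments kL {R K}.
Section Kern2.
Variable R : realType.
Variable K : R -> \bar R.
Hypothesis HK : strictly_concave_kernel K.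
Let tp := 2 * (pi : R).

Lemma kw_in u v l : 0 <= u <= tp -> 0 < v < tp -> 0 < l < 1 ->
  0 < l * u + (1 - l) * v < tp.
Proof.
move=> /andP[? ?] /andP[? ?] /andP[? ?]; apply/andP; split; nra.
Qed.

Lemma kstrict1 u v l : 0 <= u <= tp -> 0 < v < tp -> u != v -> 0 < l < 1 ->
  K u \is a fin_num ->
  l * fK K u + (1 - l) * fK K v < fK K (l * u + (1 - l) * v).
Proof.
move=> hu hv uv hl ku.
have [u0|u0] := eqVneq u 0.
  move: u0 ku => -> ku.
  apply: (@conc_endl _ (fK K) 0 tp v l (ksr HK)) => //.
  rewrite /fK /=; apply: fine_cvg.
  rewrite fineK //; move: (kr0 HK); apply: cvg_trans; exact: cvg_id.
have [ut|ut] := eqVneq u tp.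
  move: ut ku => -> ku.
  apply: (@conc_endr _ (fK K) 0 tp v l (ksr HK)) => //.
  rewrite /fK /=; apply: fine_cvg.
  rewrite fineK //; rewrite -/tp (ktp HK); move: (kltp HK); apply: cvg_trans; exact: cvg_id.
have hu' : 0 < u < tp.
  by move: hu => /andP[h1 h2]; rewrite lt_neqAle eq_sym u0 h1 lt_neqAle ut h2.
exact: (ksr HK).
Qed.
End Kern2.
Section Kern3.
Variable R : realType.
Variable K : R -> \bar R.
Hypothesis HK : strictly_concave_kernel K.
Let tp := 2 * (pi : R).

Lemma kwin u v l : 0 < l < 1 -> K u \is a fin_num -> K v \is a fin_num ->
  0 <= u <= tp -> 0 <= v <= tp -> (u != v -> (0 < u < tp) || (0 < v < tp)) ->
  [/\ K (l * u + (1 - l) * v) \is a fin_num,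
      l * fK K u + (1 - l) * fK K v <= fK K (l * u + (1 - l) * v) &
      (u != v -> l * fK K u + (1 - l) * fK K v < fK K (l * u + (1 - l) * v))].
Proof.
move=> hl ku kv hu hv hi.
have [<-|uv] := eqVneq u v.
  have -> : l * u + (1 - l) * u = u by ring.
  by split => //; rewrite -mulrDl subrKC mul1r.
have := hi uv => /orP[hu'|hv'].
  have hl' : 0 < 1 - l < 1 by move: hl => /andP[? ?]; apply/andP; split; lra.
  have vu : v != u by rewrite eq_sym.
  have := @kstrict1 _ K HK v u (1 - l) hv hu' vu hl' kv.
  have -> : (1 - l) * v + (1 - (1 - l)) * u = l * u + (1 - l) * v by ring.
  have -> : 1 - (1 - l) = l by ring.
  rewrite addrC => hs.
  have hw : 0 < l * u + (1 - l) * v < tp.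
    have := @kw_in _ v u (1 - l) hv hu' hl'.
    by have -> : (1 - l) * v + (1 - (1 - l)) * u = l * u + (1 - l) * v by ring.
  by split; [exact: (kfin HK) | exact: ltW | move=> _].
have hs := @kstrict1 _ K HK u v l hu hv' uv hl ku.
split; [ | exact: ltW | by move=> _].
apply: (kfin HK); exact: (@kw_in _ u v l hu hv' hl).
Qed.

Lemma kterm u v l : 0 < l < 1 -> K u \is a fin_num -> K v \is a fin_num ->
  [\/ (0 <= u < tp /\ 0 <= v < tp), (0 < u <= tp /\ 0 < v <= tp) |
      (- tp < u <= 0 /\ - tp < v <= 0)] ->
  [/\ K (l * u + (1 - l) * v) \is a fin_num,
      l * fK K u + (1 - l) * fK K v <= fK K (l * u + (1 - l) * v) &
      (u != v -> l * fK K u + (1 - l) * fK K v < fK K (l * u + (1 - l) * v))].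
Proof.
move=> hl ku kv [[hu hv]|[hu hv]|[hu hv]].
- apply: kwin => //.
  + by move: hu => /andP[? ?]; apply/andP; split => //; apply: ltW.
  + by move: hv => /andP[? ?]; apply/andP; split => //; apply: ltW.
  move=> uv; move: hu hv => /andP[u0 u1] /andP[v0 v1].
  have [u00|u00] := eqVneq u 0.
    have vn : v != 0 by rewrite -u00 eq_sym.
    have : 0 < v by rewrite lt_neqAle eq_sym vn v0.
    by move=> vp; apply/orP; right; rewrite vp v1.
  have : 0 < u by rewrite lt_neqAle eq_sym u00 u0.
  by move=> up; apply/orP; left; rewrite up u1.
- apply: kwin => //.
  + by move: hu => /andP[? ?]; apply/andP; split => //; apply: ltW.
  + by move: hv => /andP[? ?]; apply/andP; split => //; apply: ltW.
  move=> uv; move: hu hv => /andP[u0 u1] /andP[v0 v1].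
  have [u00|u00] := eqVneq u tp.
    have vn : v != tp by rewrite -u00 eq_sym.
    have : v < tp by rewrite lt_neqAle vn v1.
    by move=> vp; apply/orP; right; rewrite vp v0.
  have : u < tp by rewrite lt_neqAle u00 u1.
  by move=> up; apply/orP; left; rewrite up u0.
- have e : forall x, fK K x = fK K (x + tp) by move=> x; rewrite /fK (kper HK).
  have ku' : K (u + tp) \is a fin_num by rewrite (kper HK).
  have kv' : K (v + tp) \is a fin_num by rewrite (kper HK).
  have hw : l * u + (1 - l) * v + tp = l * (u + tp) + (1 - l) * (v + tp) by ring.
  have := @kwin (u + tp) (v + tp) l hl ku' kv'.
  rewrite -hw !(kper HK) -!e.
  have hu' : 0 <= u + tp <= tp by move: hu => /andP[? ?]; apply/andP; split; lra.
  have hv' : 0 <= v + tp <= tp by move: hv => /andP[? ?]; apply/andP; split; lra.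
  move=> /(_ hu' hv') H.
  have uv' : u + tp != v + tp -> (0 < u + tp < tp) || (0 < v + tp < tp).
    move=> uv; move: hu hv => /andP[u0 u1] /andP[v0 v1].
    have [u00|u00] := eqVneq u 0.
      apply/orP; right; apply/andP; split; first lra.
      have : v != 0 by move: uv; rewrite u00 => /eqP h; apply/eqP => h'; apply: h; rewrite h'.
      move=> vn; have : v < 0 by rewrite lt_neqAle vn v1.
      lra.
    apply/orP; left; apply/andP; split; first lra.
    have : u < 0 by rewrite lt_neqAle u00 u1.
    lra.
  have [Ha Hb Hc] := H uv'.
  split => // uv; apply: Hc.
  by apply: contra uv => /eqP h; apply/eqP; lra.
Qed.
End Kern3.
Arguments kterm {R K}.
Section Sums.
Variable R : realType.
Local Open Scope ereal_scope.

Lemma adde_def_ninf (x y : \bar R) : x != +oo -> y != +oo -> x +? y.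
Proof. by case: x => [x| |] //; case: y. Qed.

Lemma adde_ninf (x y : \bar R) : x != +oo -> y != +oo -> x + y != +oo.
Proof. by case: x => [x| |] //; case: y. Qed.

Lemma cvge_sumseq {I T : Type} (G : set_system T) {FG : Filter G} (r : seq I)
  (g : I -> T -> \bar R) (L : I -> \bar R) :
  (forall i, g i t @[t --> G] --> L i) -> (forall i, L i != +oo) ->
  (\sum_(i <- r) g i t) @[t --> G] --> \sum_(i <- r) L i /\
  \sum_(i <- r) L i != +oo.
Proof.
move=> gL Ln; elim: r => [|i r [IH1 IH2]].
  by rewrite big_nil; split => //; under eq_fun do rewrite big_nil; exact: cvg_cst.
rewrite big_cons; split; last exact: adde_ninf.
under eq_fun do rewrite big_cons.
by apply: cvgeD => //; exact: adde_def_ninf.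
Qed.

Lemma contract_cvg {T} (F : set_system T) {FF : Filter F} (f : T -> \bar R) (x : \bar R) :
  f @ F --> x -> ((@contract R) \o f) @ F --> @contract R x.
Proof.
move=> fx; apply/cvgrPdist_lt => e e0.
have H := @cvg_ball R _ _ _ _ _ _ fx e e0.
move: (H FF); apply: filterS => t.
by rewrite /ball /= /ereal_ball.
Qed.

Lemma attain (G : R -> \bar R) (a b : R) : (a < b)%R ->
  {in `]a, b[, forall x, G t @[t --> x] --> G x} ->
  G t @[t --> a^'+] --> G a -> G t @[t --> b^'-] --> G b ->
  exists2 c, c \in `[a, b] & forall t, t \in `[a, b] -> G t <= G c.
Proof.
move=> ab Hin Ha Hb.
have cc : {within `[a, b], continuous ((@contract R) \o G)}.
  apply/continuous_within_itvP => //; split.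
  - by move=> x hx; apply: contract_cvg; exact: Hin.
  - exact: contract_cvg.
  - exact: contract_cvg.
have [c hc Hc] := EVT_max (ltW ab) cc.
exists c => // t ht; have := Hc t ht.
by rewrite /= le_contract.
Qed.
End Sums.
Section Comb.
Variable R : realType.
Variable n : nat.
Variable s : 'S_n.
Let tp := 2 * (pi : R).

Lemma yext0 (y : 'I_n -> R) : yext y 0 = 0.
Proof. by []. Qed.

Lemma yextS (y : 'I_n -> R) (j : 'I_n) : yext y j.+1 = y j.
Proof.
rewrite /yext /=; case: insubP => [j' _ /val_inj -> //|].
by rewrite ltn_ord.
Qed.

Lemma yextN (y : 'I_n -> R) : yext y n.+1 = tp.
Proof.
rewrite /yext /=; case: insubP => [j' | //].
by rewrite ltnn.
Qed.

Lemma sext0 : sext s 0 = 0%N. Proof. by []. Qed.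
Lemma sextN : sext s n.+1 = n.+1.
Proof. by rewrite /sext /=; case: insubP => [j'|//]; rewrite ltnn. Qed.

Lemma sextS (j : 'I_n) : sext s j.+1 = (s j).+1.
Proof.
rewrite /sext /=; case: insubP => [j' _ /val_inj -> //|].
by rewrite ltn_ord.
Qed.

Definition pos (j : 'I_n) : nat := ((s^-1)%g j).+1.

Lemma sext_pos j : sext s (pos j) = j.+1.
Proof. by rewrite /pos sextS permKV. Qed.

Lemma pos_le j : (0 < pos j <= n)%N.
Proof. by rewrite /pos /= ltn_ord. Qed.

Lemma spos_le (i : 'I_n.+1) : (spos s i <= n)%N.
Proof.
rewrite /spos; case: eqP => // i0.
case: insubP => [j _ _|]; first by rewrite ltn_ord.
by rewrite -ltnS; case: i i0 => [[|i] hi] //=.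
Qed.

Lemma sext_spos (i : 'I_n.+1) : sext s (spos s i) = i.
Proof.
rewrite /spos; case: eqP => [-> //|i0].
case: insubP => [j _ hj|].
  by rewrite sextS permKV hj; case: (nat_of_ord i) i0.
move=> h; exfalso; move: h; case: i i0 => [[|i] hi] //= _.
by rewrite -ltnS hi.
Qed.

Section Y.
Variable y : 'I_n -> R.
Hypothesis hy : in_simplex s y.
Definition cc k := yext y (sext s k).

Lemma cc_lt p q : (p < q)%N -> (q <= n.+1)%N -> cc p < cc q.
Proof.
elim: q => [//|q IH] pq qn.
have hq : cc q < cc q.+1 by apply: hy.
move: pq; rewrite ltnS leq_eqVlt => /orP[/eqP -> //|pq].
by apply: lt_trans hq; apply: IH => //; apply: ltnW.
Qed.

Lemma cc_le p q : (p <= q)%N -> (q <= n.+1)%N -> cc p <= cc q.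
Proof.
rewrite leq_eqVlt => /orP[/eqP -> //|pq qn].
by apply/ltW/cc_lt.
Qed.

Lemma cc0 : cc 0 = 0. Proof. by []. Qed.
Lemma ccN : cc n.+1 = tp. Proof. by rewrite /cc sextN yextN. Qed.

Lemma y_pos j : y j = cc (pos j).
Proof. by rewrite /cc sext_pos yextS. Qed.

Lemma y_bnd j : 0 < y j < tp.
Proof.
have /andP[h1 h2] := pos_le j.
rewrite y_pos -cc0 -ccN; apply/andP; split; apply: cc_lt => //.
by apply: ltnW.
Qed.
End Y.

Lemma yext_conv l (y z : 'I_n -> R) k :
  yext (convcomb l y z) k = l * yext y k + (1 - l) * yext z k.
Proof.
rewrite /yext; case: eqP => _; first by rewrite !mulr0 addr0.
case: insubP => [j _ _ //|_].
by rewrite -mulrDl subrKC mul1r.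
Qed.
End Comb.
Arguments pos {n} s j.
Arguments cc {R n} s y k.
Arguments cc_lt {R n s y}. Arguments cc_le {R n s y}. Arguments cc0 {R n} s y.
Arguments ccN {R n s y}. Arguments y_pos {R n} s y j. Arguments y_bnd {R n s y}.
Arguments sext_pos {n} s j. Arguments pos_le {n} s j. Arguments spos_le {n} s i.
Arguments sext_spos {n} s i. Arguments yext_conv {R n}.
Arguments yextS {R n}. Arguments yextN {R n}. Arguments sextS {n}. Arguments sextN {n}.
Section Main.
Variable R : realType.
Variable n : nat.
Variable K : 'I_n.+1 -> R -> \bar R.
Hypothesis HK : forall i, strictly_concave_kernel (K i).
Variable s : 'S_n.
Let tp := 2 * (pi : R).
Local Open Scope ereal_scope.

Lemma sum_fin {I} (r : seq I) (f : I -> \bar R) :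
  (forall i, f i \is a fin_num) -> \sum_(i <- r) f i \is a fin_num.
Proof.
move=> h; elim: r => [|i r IH]; first by rewrite big_nil.
by rewrite big_cons fin_numD h IH.
Qed.

Lemma sum_fin_inv {I : eqType} (r : seq I) (f : I -> \bar R) :
  \sum_(i <- r) f i \is a fin_num -> forall i, i \in r -> f i \is a fin_num.
Proof.
elim: r => [//|i r IH]; rewrite big_cons fin_numD => /andP[h1 h2] j.
by rewrite in_cons => /orP[/eqP -> //|]; apply: IH.
Qed.

Lemma sum_ninf {I} (r : seq I) (f : I -> \bar R) :
  (forall i, f i != +oo) -> \sum_(i <- r) f i != +oo.
Proof.
move=> h; elim: r => [|i r IH]; first by rewrite big_nil.
by rewrite big_cons adde_ninf.
Qed.

Lemma Fsum_ninf y t : Fsum K y t != +oo.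
Proof.
rewrite /Fsum; apply: adde_ninf; first exact: (kninf (HK _)).
by apply: sum_ninf => j; exact: (kninf (HK _)).
Qed.

Lemma Fsum_cvg (y : 'I_n -> R) (G : set_system R) {FG : Filter G} x :
  K ord0 t @[t --> G] --> K ord0 x ->
  (forall j, K (lift ord0 j) (t - y j) @[t --> G] --> K (lift ord0 j) (x - y j)) ->
  Fsum K y t @[t --> G] --> Fsum K y x.
Proof.
move=> h0 hj; rewrite /Fsum.
have [hs hs'] := @cvge_sumseq R _ _ G FG (index_enum 'I_n)
  (fun j t => K (lift ord0 j) (t - y j)) (fun j => K (lift ord0 j) (x - y j)) hj
  (fun j => kninf (HK _) _).
apply: cvgeD => //; apply: adde_def_ninf => //; exact: (kninf (HK _)).
Qed.

Lemma kfin' i x : (- tp < x < tp)%R -> x != 0%R -> K i x \is a fin_num.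
Proof.
move=> /andP[h1 h2] x0.
have [xp|xn] := ltP 0%R x; first by apply: (kfin (HK i)); rewrite xp.
rewrite -(kper (HK i)); apply: (kfin (HK i)).
have : (x < 0)%R by rewrite lt_neqAle x0.
by move=> ?; apply/andP; split; rewrite -/tp; lra.
Qed.

Section Y.
Variable y : 'I_n -> R.
Hypothesis hy : in_simplex s y.
Variable i : 'I_n.+1.
Let k := spos s i.
Let a := cc s y k.
Let b := cc s y k.+1.

Lemma ab_lt : (a < b)%R.
Proof. by apply: hy; exact: spos_le. Qed.
Lemma a_ge0 : (0 <= a)%R.
Proof. by rewrite -(cc0 s y); apply: cc_le => //; exact: leqW (spos_le s i). Qed.
Lemma b_le : (b <= tp)%R.
Proof. by rewrite /tp -(@ccN R n s y); apply: cc_le => //; rewrite !ltnS spos_le. Qed.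

Lemma yj_side j : ((pos s j <= k)%N -> (y j <= a)%R) /\ ((k < pos s j)%N -> (b <= y j)%R).
Proof.
have /andP[_ pn] := pos_le s j.
rewrite (y_pos s y j); split => h; apply: cc_le => //.
  exact: leqW (spos_le s i).
exact: leqW pn.
Qed.

Lemma yj_bnd j : (0 < y j < tp)%R.
Proof. exact: (y_bnd hy). Qed.

Lemma attain_y : exists2 c, c \in `[a, b] &
  forall t, t \in `[a, b] -> Fsum K y t <= Fsum K y c.
Proof.
have hab := ab_lt; have ha := a_ge0; have hb := b_le.
apply: attain => //.
- move=> x; rewrite in_itv /= => /andP[x1 x2].
  apply: Fsum_cvg.
    by apply: (kC (HK _)); rewrite -/tp; [apply/andP; split; lra | apply/eqP => h; lra].
  move=> j; have [s1 s2] := yj_side j; have /andP[yj1 yj2] := yj_bnd j.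
  have hx : (x - y j != 0)%R.
    case: (leqP (pos s j) k) => hp.
      by have := s1 hp => ?; apply/eqP => h; lra.
    by have := s2 hp => ?; apply/eqP => h; lra.
  have hb' : (- tp < x - y j < tp)%R by apply/andP; split; lra.
  have H := @kC _ _ (HK (lift ord0 j)) (x - y j)%R hb' hx.
  have := @shN R _ _ (x - y j)%R (- y j)%R _ H.
  by rewrite opprK subrK.
- apply: Fsum_cvg.
    by apply: (kR (HK _)); rewrite -/tp; apply/andP; split; lra.
  move=> j; have /andP[yj1 yj2] := yj_bnd j.
  have hb' : (- tp < a - y j < tp)%R by apply/andP; split; lra.
  have H := @kR _ _ (HK (lift ord0 j)) (a - y j)%R hb'.
  have := @shR R _ _ (a - y j)%R (- y j)%R _ H.
  by rewrite opprK subrK.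
- apply: Fsum_cvg.
    by apply: (kL (HK _)); rewrite -/tp; apply/andP; split; lra.
  move=> j; have /andP[yj1 yj2] := yj_bnd j.
  have hb' : (- tp < b - y j <= tp)%R by apply/andP; split; lra.
  have H := @kL _ _ (HK (lift ord0 j)) (b - y j)%R hb'.
  have := @shL R _ _ (b - y j)%R (- y j)%R _ H.
  by rewrite opprK subrK.
Qed.

Lemma Fsum_fin_mid : Fsum K y ((a + b) / 2)%R \is a fin_num.
Proof.
have hab := ab_lt; have ha := a_ge0; have hb := b_le.
set m := ((a + b) / 2)%R.
have m1 : (a < m)%R by rewrite /m; lra.
have m2 : (m < b)%R by rewrite /m; lra.
rewrite /Fsum fin_numD; apply/andP; split.
  by apply: (kfin (HK _)); rewrite -/tp; apply/andP; split; lra.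
apply: sum_fin => j.
have [s1 s2] := yj_side j; have /andP[yj1 yj2] := yj_bnd j.
apply: kfin'; first by apply/andP; split; lra.
case: (leqP (pos s j) k) => hp.
  by have := s1 hp => ?; apply/eqP => h; lra.
by have := s2 hp => ?; apply/eqP => h; lra.
Qed.

Lemma mval_attain : exists c, [/\ c \in `[a, b], mval K s i y = Fsum K y c,
  Fsum K y c \is a fin_num & forall t, t \in `[a, b] -> Fsum K y t <= Fsum K y c].
Proof.
have [c hc Hc] := attain_y.
exists c; split => //.
- rewrite /mval /=; apply/eqP; rewrite eq_le; apply/andP; split.
    by apply: ge_ereal_sup => _ [t ht <-]; apply: Hc; exact: ht.
  by apply: ereal_sup_ubound; exists c.
- have hab := ab_lt.
  have hm : ((a + b) / 2)%R \in `[a, b] by rewrite in_itv /=; apply/andP; split; lra.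
  have := Hc _ hm; have := Fsum_fin_mid.
  rewrite !fin_numE => /andP[h1 _] h2; rewrite Fsum_ninf andbT.
  by apply: contra h1 => /eqP h; move: h2; rewrite h leeNy_eq => /eqP ->.
Qed.
End Y.
Arguments ab_lt {y}. Arguments a_ge0 {y}. Arguments b_le {y}. Arguments yj_side {y}.
Arguments yj_bnd {y}. Arguments mval_attain {y}. Arguments attain_y {y}.

Lemma n_pos (y z : 'I_n -> R) : y <> z -> (0 < n)%N.
Proof.
case: n y z => [|m] // y z yz; exfalso; apply: yz.
by apply/funext => -[].
Qed.
Arguments n_pos {y z}.

Lemma Fsum_terms y t : Fsum K y t \is a fin_num ->
  K ord0 t \is a fin_num /\ forall j, K (lift ord0 j) (t - y j)%R \is a fin_num.
Proof.
rewrite /Fsum fin_numD => /andP[h1 h2]; split => // j.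
by apply: (@sum_fin_inv _ (index_enum 'I_n) (fun j => K (lift ord0 j) (t - y j)%R) h2); rewrite mem_index_enum.
Qed.

Arguments Fsum_terms {y t}.
Lemma Fsum_real y t : K ord0 t \is a fin_num ->
  (forall j, K (lift ord0 j) (t - y j)%R \is a fin_num) ->
  Fsum K y t = (fK (K ord0) t + \sum_(j < n) fK (K (lift ord0 j)) (t - y j))%:E.
Proof.
move=> h0 hj; rewrite /Fsum EFinD -sumEFin /fK fineK //.
by congr (_ + _); apply: eq_bigr => j _; rewrite fineK.
Qed.

Arguments Fsum_real {y t}.
Lemma mval_sconc i : strictly_concave_on (in_simplex s) (mval K s i).
Proof.
move=> y z l hy hz yz hl.
have n0 := n_pos yz.
have [cy [hcy my Fy maxy]] := mval_attain hy i.
have [cz [hcz mz Fz maxz]] := mval_attain hz i.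
set w := convcomb l y z.
set k := spos s i.
set tw := (l * cy + (1 - l) * cz)%R.
have /andP[l0 l1] := hl.
have hab_y := ab_lt hy i; have ha_y := a_ge0 hy i; have hb_y := b_le hy i.
have hab_z := ab_lt hz i; have ha_z := a_ge0 hz i; have hb_z := b_le hz i.
rewrite -/k in hab_y ha_y hb_y hab_z ha_z hb_z hcy hcz.
move: hcy hcz; rewrite !in_itv /= => /andP[cy1 cy2] /andP[cz1 cz2].
have hmw : Fsum K w tw <= mval K s i w.
  rewrite /mval /=; apply: ereal_sup_ubound; exists tw => //.
  rewrite /= in_itv /= !yext_conv -/k; apply/andP; split.
    by rewrite /tw /cc in cy1 cz1 *; nra.
  by rewrite /tw /cc in cy2 cz2 *; nra.
apply: (lt_le_trans _ hmw); rewrite my mz.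
have [h0y hjy] := Fsum_terms Fy.
have [h0z hjz] := Fsum_terms Fz.
have W0 : [\/ (0 <= cy < tp /\ 0 <= cz < tp)%R, (0 < cy <= tp /\ 0 < cz <= tp)%R |
      (- tp < cy <= 0 /\ - tp < cz <= 0)%R].
  have [k0|k0] := eqVneq k 0%N.
    have c1y : (cc s y 1 < tp)%R by rewrite /tp -(@ccN R n s y); apply: cc_lt.
    have c1z : (cc s z 1 < tp)%R by rewrite /tp -(@ccN R n s z); apply: cc_lt.
    rewrite k0 in cy1 cy2 cz1 cz2 ha_y ha_z.
    by apply: Or31; split; apply/andP; split; lra.
  have c1y : (0 < cc s y k)%R by rewrite -(cc0 s y); apply: cc_lt; rewrite ?lt0n // leqW // spos_le.
  have c1z : (0 < cc s z k)%R by rewrite -(cc0 s z); apply: cc_lt; rewrite ?lt0n // leqW // spos_le.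
  by apply: Or32; split; apply/andP; split; lra.
have [f0 le0 lt0] := kterm (HK ord0) cy cz l hl h0y h0z W0.
have Wj : forall j, [\/ (0 <= cy - y j < tp /\ 0 <= cz - z j < tp)%R,
      (0 < cy - y j <= tp /\ 0 < cz - z j <= tp)%R |
      (- tp < cy - y j <= 0 /\ - tp < cz - z j <= 0)%R].
  move=> j.
  have [s1y s2y] := yj_side hy i j; have /andP[y1 y2] := yj_bnd hy j.
  have [s1z s2z] := yj_side hz i j; have /andP[z1 z2] := yj_bnd hz j.
  rewrite -/k in s1y s2y s1z s2z.
  case: (leqP (pos s j) k) => hp.
    have := s1y hp; have := s1z hp => ? ?.
    by apply: Or31; split; apply/andP; split; lra.
  have := s2y hp; have := s2z hp => ? ?.
  by apply: Or33; split; apply/andP; split; lra.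
have Hj := fun j => kterm (HK (lift ord0 j)) (cy - y j)%R (cz - z j)%R l hl (hjy j) (hjz j) (Wj j).
have ew : forall j, (tw - w j = l * (cy - y j) + (1 - l) * (cz - z j))%R.
  by move=> j; rewrite /tw /w /convcomb; ring.
rewrite (Fsum_real h0y hjy) (Fsum_real h0z hjz).
rewrite (@Fsum_real w tw f0); last by move=> j; rewrite ew; case: (Hj j).
rewrite -!EFinM -EFinD lte_fin.
have -> : (\sum_(j < n) fK (K (lift ord0 j)) (tw - w j) =
  \sum_(j < n) fK (K (lift ord0 j)) (l * (cy - y j) + (1 - l) * (cz - z j)))%R.
  by apply: eq_bigr => j _; rewrite ew.
rewrite !mulrDr !mulr_sumr addrACA -big_split /=.
have [cyz|cyz] := eqVneq cy cz.
  have [j0 hj0] : exists j0, y j0 != z j0.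
    apply/existsP; apply: contraT; rewrite negb_exists => /forallP H.
    by exfalso; apply: yz; apply/funext => j; apply/eqP; move: (H j); rewrite negbK.
  apply: ler_ltD => //.
  rewrite (bigD1 j0) // [X in (_ < X)%R](bigD1 j0) //=.
  apply: ltr_leD.
    case: (Hj j0) => _ _; apply; rewrite cyz.
    by apply: contra hj0 => /eqP h; apply/eqP; lra.
  by apply: ler_sum => j _; case: (Hj j).
apply: ltr_leD; first exact: lt0.
by apply: ler_sum => j _; case: (Hj j).
Qed.
End Main.
Local Close Scope classical_set_scope.
Local Open Scope ring_scope.
Theorem proposition7p2 (R : realType) (n : nat)
  (K : 'I_n.+1 -> R -> \bar R) (s : 'S_n) :
  (forall i, strictly_concave_kernel (K i)) ->
  (forall i : 'I_n.+1,
     (forall y, in_simplex s y -> mval K s i y \is a fin_num) /\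
     strictly_concave_on (in_simplex s) (mval K s i)) /\
  strictly_concave_on (in_simplex s) (mmin K s).
Proof.
move=> HK.
have Hi : forall i : 'I_n.+1, strictly_concave_on (in_simplex s) (mval K s i).
  by move=> i; exact: (@mval_sconc R n K HK s i).
split.
  move=> i; split => // y hy.
  by have [c [_ -> Fc _]] := @mval_attain R n K HK s y hy i.
move=> y z l hy hz yz hl.
have /andP[l0 l1] := hl.
have l0' : (0 <= l%:E)%E by rewrite lee_fin ltW.
have l1' : (0 <= (1 - l)%:E)%E by rewrite lee_fin subr_ge0 ltW.
have Hle : forall i, (l%:E * mmin K s y + (1 - l)%:E * mmin K s z <=
    l%:E * mval K s i y + (1 - l)%:E * mval K s i z)%E.
  move=> i; apply: leeD; apply: lee_wpmul2l => //; exact: bigmin_le.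
rewrite /mmin; apply: lt_bigmin.
  apply: (le_lt_trans (Hle ord0)); apply: (lt_le_trans (Hi ord0 y z l hy hz yz hl)).
  exact: leey.
by move=> i _; apply: (le_lt_trans (Hle i)); exact: (Hi i y z l hy hz yz hl).
Qed.
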